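(* Let $F$ be an ordered forest with priority forest $P$ and priority traversal $\tau$. Then $\tau^{-1}$ is the Jordan–Hölder permutation of a unique maximal chain of $I_P=[\hat0,P]$.
   Context: $[n]=\{1,\dots,n\}$, $[n]_0=\{0,\dots,n\}$. An ordered $(m,n)$-forest is a rooted forest with $n+1$ nodes and $m$ edges whose component trees $T_0,\dots,T_{n-m}$ are totally ordered, with unlabeled roots marked $\circ,\circ_1,\dots,\circ_{n-m}$, and non-root vertices labeled bijectively by $[m]$. Priority search: initially only the children of $\circ$ are unblocked; at each step visit the unblocked unvisited node with the smallest label and unblock its children; when a tree is exhausted, move to the next tree, visit its root and unblock its children. Steps are numbered $1,\dots,n$ (the visit of $\circ$ is not counted). The priority traversal $\tau$ is the partial permutation $[n]\to[m]$ sending step $i$ to the label of the node visited at step $i$, undefined when that node is a root; $\tau^{-1}:[m]\to[n]$ is its inverse. The priority forest $P$ is obtained by relabeling each node by its visiting step, with $\circ$ labeled $0$. A priority forest on $[n]_0$ is a rooted forest with vertex set $[n]_0$ whose component trees are increasing (each non-root vertex has a larger label than its parent) and such that for $j<k$ every label of the $j$-th tree is smaller than every label of the $k$-th tree. $\Pi(n)$ is the poset of priority forests on $[n]_0$ ordered by inclusion of edge sets, with an extra top element; $\hat0$ is the edgeless forest. For priority forests $Q\lessdot Q'$ (one edge added), $\lambda(Q,Q')$ is the larger endpoint of the edge in $E(Q')\setminus E(Q)$. A maximal chain $\hat0=P_0\lessdot\cdots\lessdot P_m=P$ has Jordan–Hölder permutation $[m]\to[n]$, $i\mapsto\lambda(P_{i-1},P_i)$.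 *)

(* Defs.v *)
From mathcomp Require Import all_boot.
Set Implicit Arguments. Unset Strict Implicit. Unset Printing Implicit Defensive.

(** * Ordered (m,n)-forests
   Nodes are encoded as [nat + nat]:
     [inl j]  = the root [o_j] of the j-th tree (j = 0..n-m; [inl 0] is [o]),
     [inr i]  = the non-root vertex labelled i (i = 1..m). *)

Definition up (par : nat -> nat + nat) (v : nat + nat) : nat + nat :=
  match v with inl j => inl j | inr x => par x end.

Definition is_root_node (v : nat + nat) : bool :=
  if v is inl _ then true else false.

Definition is_ordforest (m n : nat) (par : nat -> nat + nat) : Prop :=
  m <= n /\
  (forall i, 1 <= i <= m ->
     match par i with inl j => j <= n - m | inr k => 1 <= k <= m end) /\
  (* acyclicity: every labelled vertex reaches a root *)
  (forall i, 1 <= i <= m -> exists k, is_root_node (iter k (up par) (inr i))).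

Definition kids (m : nat) (par : nat -> nat + nat) (v : nat + nat) : seq nat :=
  [seq i <- iota 1 m | par i == v].

(** Priority search. [fr] = unblocked unvisited labels, [j] = current tree.
    Returns the nodes visited at the successive steps. *)
Fixpoint psearch (m n : nat) (par : nat -> nat + nat)
    (fuel j : nat) (fr : seq nat) : seq (nat + nat) :=
  match fuel with
  | 0 => [::]
  | fuel'.+1 =>
    if fr is y :: _ then
      let x := foldl minn y fr in
      inr x :: psearch m n par fuel' j (rem x fr ++ kids m par (inr x))
    else if j < n - m then
      inl j.+1 :: psearch m n par fuel' j.+1 (kids m par (inl j.+1))
    else [::]
  end.

(** visits at steps 1..n (the visit of [o] is step 0, not recorded) *)
Definition visit_order (m n : nat) (par : nat -> nat + nat) : seq (nat + nat) :=
  psearch m n par n 0 (kids m par (inl 0)).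

Definition step_of (m n : nat) (par : nat -> nat + nat) (v : nat + nat) : nat :=
  if v == inl 0 then 0 else (index v (visit_order m n par)).+1.

Definition tau_inv (m n : nat) (par : nat -> nat + nat) (x : nat) : nat :=
  step_of m n par (inr x).

(** Priority forests on [n]_0, as sets of oriented edges (parent, child). *)
Definition edge n := ('I_n.+1 * 'I_n.+1)%type.

Definition prio_forest (m n : nat) (par : nat -> nat + nat) : {set edge n} :=
  [set ((inord (step_of m n par (par i.+1)) : 'I_n.+1),
        (inord (step_of m n par (inr i.+1)) : 'I_n.+1)) | i : 'I_m].

Definition adj n (E : {set edge n}) : rel 'I_n.+1 :=
  fun x y => ((x, y) \in E) || ((y, x) \in E).

Definition is_prio_forest n (E : {set edge n}) : Prop :=
  (* rooted forest with increasing trees: each vertex has at most one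
     parent, and the parent is smaller *)
  (forall e, e \in E -> (e.1 < e.2)%N) /\
  (forall e e', e \in E -> e' \in E -> e.2 = e'.2 -> e = e') /\
  (* trees can be ordered so that labels of earlier trees are smaller *)
  (forall x y, ~~ connect (adj E) x y ->
     (forall u v, connect (adj E) x u -> connect (adj E) y v -> (u < v)%N) \/
     (forall u v, connect (adj E) x u -> connect (adj E) y v -> (v < u)%N)).

Definition pf_cover n (Q Q' : {set edge n}) : Prop :=
  is_prio_forest Q /\ is_prio_forest Q' /\ Q \proper Q' /\
  (forall R, is_prio_forest R -> Q \subset R -> R \subset Q' -> R = Q \/ R = Q').

Definition lambda n (Q Q' : {set edge n}) : nat :=
  if [pick e in Q' :\: Q] is Some e then maxn e.1 e.2 else 0.

Definition max_chain (m n : nat) (P : {set edge n})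
    (c : {ffun 'I_m.+1 -> {set edge n}}) : Prop :=
  c ord0 = set0 /\ c ord_max = P /\
  (forall k : 'I_m, pf_cover (c (inord k)) (c (inord k.+1))).

(** Jordan-Hoelder permutation: i |-> lambda(P_{i-1}, P_i), i in [m];
    here applied to k = i-1 : 'I_m *)
Definition JH (m n : nat) (c : {ffun 'I_m.+1 -> {set edge n}}) (k : 'I_m) : nat :=
  lambda (c (inord k)) (c (inord k.+1)).

(* Main.v *)
Require Import Defs.
From mathcomp Require Import all_boot zify.
Set Implicit Arguments. Unset Strict Implicit. Unset Printing Implicit Defensive.


Lemma foldl_min_le a s : foldl minn a s <= a.
Proof. elim: s a => [|x s IH] a //=. apply: leq_trans (IH _) _. exact: geq_minl. Qed.

Lemma foldl_min_lex a s x : x \in s -> foldl minn a s <= x.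
Proof.
elim: s a => [|y s IH] a //=. rewrite in_cons => /orP[/eqP->|xs].
  apply: leq_trans (foldl_min_le _ _) _. exact: geq_minr.
exact: IH.
Qed.

Lemma foldl_min_mem a s : foldl minn a s \in a :: s.
Proof.
elim: s a => [|y s IH] a /=; first by rewrite inE.
have := IH (minn a y). rewrite !inE /minn. case: ifP => _ /orP[->|->]; by rewrite ?orbT.
Qed.

Lemma foldl_min_in y F : foldl minn y (y :: F) \in y :: F.
Proof. by have := foldl_min_mem y (y :: F); rewrite inE => /orP[/eqP->|]; rewrite ?inE ?eqxx. Qed.

Section PS.
Variables (m n : nat) (par : nat -> nat + nat).

Notation ps := (psearch m n par).

Lemma size_ps fuel j F : size (ps fuel j F) <= fuel.
Proof.
elim: fuel j F => [|f IH] j F //=. case: F => [|y F] /=.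
  case: ifP => _ //=. exact: IH.
exact: IH.
Qed.

Lemma kidsP v i : (i \in kids m par v) = (1 <= i <= m) && (par i == v).
Proof. rewrite /kids mem_filter mem_iota andbC. by case: (par i == v); rewrite ?andbF //= addnC addn1 ltnS. Qed.

Lemma avail_min fuel j F t v : 1 <= v <= m -> t < size (ps fuel j F) ->
  (v \in F) || (par v \in take t (ps fuel j F)) -> inr v \notin take t (ps fuel j F) ->
  exists y, nth (inl 0) (ps fuel j F) t = inr y /\ y <= v.
Proof.
move=> hv.
elim: fuel j F t => [|f IH] j F t //=. case: F => [|y F] /=.
  case: ifP => // hj. case: t => [|t] /=; first by rewrite in_nil.
  rewrite ltnS => ht hav hn. move: hav hn.
  rewrite [par v \in _]in_cons [inr v \in _]in_cons negb_or => hav /andP[_ hnv].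
  apply: IH => //. case/orP: hav => [/eqP e|->]; last by rewrite orbT.
  by rewrite kidsP hv e eqxx.
set x := foldl minn y (y :: F).
case: t => [|t] /=.
  move=> _ hav _. exists x; split => //. apply: foldl_min_lex. by case/orP: hav.
rewrite ltnS => ht hav hn. move: hav hn.
rewrite [par v \in _]in_cons [inr v \in _]in_cons negb_or => hav /andP[hnv1 hnv].
apply: IH => //. rewrite mem_cat. case/orP: hav => [hvF|/orP[/eqP e|->]]; last by rewrite !orbT.
- have hxv : v != x by apply: contra hnv1 => /eqP->.
  have := perm_to_rem (foldl_min_mem y (y :: F)). rewrite -/x.
  have hxin : x \in y :: F. by have := foldl_min_mem y (y :: F); rewrite -/x inE => /orP[/eqP->|]; rewrite ?inE ?eqxx.
  by move=> _; rewrite (perm_mem (perm_to_rem hxin)) inE (negbTE hxv) /= in hvF; rewrite hvF.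
- by rewrite kidsP hv e eqxx orbT.
Qed.

Lemma parent_before fuel j F t x : t < size (ps fuel j F) ->
  nth (inl 0) (ps fuel j F) t = inr x -> (x \in F) || (par x \in take t (ps fuel j F)).
Proof.
elim: fuel j F t => [|f IH] j F t //=. case: F => [|y F] /=.
  case: ifP => // hj. case: t => [|t] //=.
  rewrite ltnS => ht hn. rewrite in_cons.
  case/orP: (IH _ _ _ ht hn) => [|->]; last by rewrite !orbT.
  by rewrite kidsP => /andP[_ ->].
set x0 := foldl minn y (y :: F).
have hxin : x0 \in y :: F. by have := foldl_min_mem y (y :: F); rewrite -/x0 inE => /orP[/eqP->|]; rewrite ?inE ?eqxx.
case: t => [|t] /=.
  by move=> _ [<-]; apply/orP; left; exact: hxin.
rewrite ltnS => ht hn. rewrite [par x \in _]in_cons.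
case/orP: (IH _ _ _ ht hn) => [|->]; last by rewrite !orbT.
move=> hr; have : x \in rem x0 (y :: F) ++ kids m par (inr x0) := hr.
rewrite mem_cat => /orP[hr'|]; last by rewrite kidsP => /andP[_ ->]; rewrite orbT.
by rewrite (mem_rem hr').
Qed.
End PS.

Section Inv.
Variables (m n : nat) (par : nat -> nat + nat).
Hypothesis H : is_ordforest m n par.
Notation ps := (psearch m n par).

Definition good (w : nat + nat) : bool :=
  match w with inl j => (1 <= j <= n - m) | inr x => (1 <= x <= m) end.

Record Inv (V : seq (nat + nat)) (j : nat) (F : seq nat) : Prop := {
  i_uV : uniq V; i_uF : uniq F; i_dis : forall i, inr i \in V -> i \notin F;
  i_par : forall i, 1 <= i <= m -> ((inr i \in V) || (i \in F)) = ((par i \in V) || (par i == inl 0));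
  i_root : forall j', (inl j' \in V) = (1 <= j' <= j);
  i_gV : all good V; i_gF : all (fun i => 1 <= i <= m) F; i_j : j <= n - m }.

Lemma kids_uniq v : uniq (kids m par v).
Proof. exact/filter_uniq/iota_uniq. Qed.

Lemma inv_step V j F x : Inv V j F -> x \in F ->
  Inv (rcons V (inr x)) j (rem x F ++ kids m par (inr x)).
Proof.
case=> uV uF dis ipar iroot gV gF hj xF.
have xnV : inr x \notin V by apply: contraL xF => /dis.
have hx : 1 <= x <= m by exact: (allP gF).
have kidF i : i \in kids m par (inr x) -> (inr i \notin V) && (i \notin F).
  rewrite kidsP => /andP[hi /eqP pe]. have := ipar i hi. rewrite pe (negbTE xnV) /=.
  by move/norP => [-> ->].
split.
- by rewrite rcons_uniq xnV uV.
- rewrite cat_uniq rem_uniq // kids_uniq andbT /=. apply/hasPn => i /kidF /andP[_].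
  by apply: contra => /mem_rem.
- move=> i. rewrite mem_rcons in_cons => /orP[/eqP[->]|iV].
    rewrite mem_cat mem_rem_uniqF //= kidsP hx /=. apply/negP => /eqP pe.
    have := ipar x hx. rewrite xF pe orbT /= (negbTE xnV) /=. done.
  rewrite mem_cat negb_or. apply/andP; split.
    by apply: contra (dis _ iV) => /mem_rem.
  by apply/negP => /kidF; rewrite iV.
- move=> i hi. rewrite !mem_rcons !in_cons mem_cat kidsP hi /=.
  have -> : (i \in rem x F) = (i != x) && (i \in F) by rewrite (mem_rem_uniq _ uF) inE.
  rewrite -[in RHS]orbA -(ipar i hi) (inj_eq (@inr_inj _ _)).
  case: (eqVneq i x) => [->|ne] /=; first by rewrite xF !orbT.
  by case: (inr i \in V); case: (i \in F); case: (par i == inr x).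
- by move=> j'; rewrite mem_rcons in_cons iroot.
- by rewrite all_rcons /= hx.
- apply/allP => i; rewrite mem_cat => /orP[/mem_rem|]; first by apply: (allP gF).
  by rewrite kidsP => /andP[].
- done.
Qed.

Lemma inv_root V j : Inv V j [::] -> j < n - m ->
  Inv (rcons V (inl j.+1)) j.+1 (kids m par (inl j.+1)).
Proof.
case=> uV uF dis ipar iroot gV gF hj hjl.
have wnV : inl j.+1 \notin V by rewrite iroot ltnn andbF.
have kidF i : i \in kids m par (inl j.+1) -> (inr i \notin V).
  rewrite kidsP => /andP[hi /eqP pe]. have := ipar i hi. rewrite pe (negbTE wnV) /= orbF.
  by move=> ->.
split.
- by rewrite rcons_uniq wnV uV.
- exact: kids_uniq.
- move=> i. rewrite mem_rcons in_cons /= => iV. by apply/negP => /kidF; rewrite iV.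
- move=> i hi. rewrite !mem_rcons !in_cons kidsP hi /=.
  have := ipar i hi; rewrite orbF => ->.
  by case: (par i == inl j.+1); case: (par i \in V); case: (par i == inl 0).
- move=> j'; rewrite mem_rcons in_cons iroot (inj_eq (@inl_inj _ _)).
  case: (eqVneq j' j.+1) => [->|h] /=; first by rewrite leqnn.
  by apply/idP/idP => /andP[a b]; apply/andP; split => //; lia.
- by rewrite all_rcons /= hjl gV.
- apply/allP => i. by rewrite kidsP => /andP[].
- done.
Qed.

Lemma inv_init : Inv [::] 0 (kids m par (inl 0)).
Proof.
split => //.
- exact: kids_uniq.
- by move=> i hi; rewrite kidsP hi.
- by move=> j'; rewrite in_nil; case: j' => [|[]].
- apply/allP => i. by rewrite kidsP => /andP[].
Qed.

Definition rng (w : nat + nat) : bool :=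
  match w with inl a => a <= n - m | inr y => (1 <= y <= m) end.

Lemma rng_iter i t : 1 <= i <= m -> rng (iter t (up par) (inr i)).
Proof.
case: H => _ [hr _] hi. elim: t => [|t IH] //=.
move: IH. case: (iter t (up par) (inr i)) => [a|y] //= hy.
by have := hr y hy; case: (par y).
Qed.

Lemma closure V : Inv V (n - m) [::] -> forall i, 1 <= i <= m -> inr i \in V.
Proof.
case=> uV uF dis ipar iroot gV gF hj i hi.
have Vx_root a : a <= n - m -> (inl a \in V) || (inl a == inl 0 :> nat + nat).
  move=> ha; rewrite iroot ha andbT. by case: a ha.
case: H => _ [hr hac]; case: (hac i hi) => k hk.
suff: forall d, d <= k -> let w := iter (k - d) (up par) (inr i) in (w \in V) || (w == inl 0).
  by move/(_ k (leqnn k)); rewrite subnn /= orbF.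
elim=> [|d IH] hd /=.
  rewrite subn0. have := rng_iter k hi. move: hk.
  case: (iter k (up par) (inr i)) => [a|y] //= _. exact: Vx_root.
have := IH (ltnW hd). rewrite /=.
have e : k - d = (k - d.+1).+1 by lia.
rewrite e iterS. have := rng_iter (k - d.+1) hi.
case: (iter (k - d.+1) (up par) (inr i)) => [a|y] /= hr'.
  by move=> _; apply: Vx_root.
move=> hp. have := ipar y hr'. rewrite hp /= orbF => ->. done.
Qed.

Lemma ps_cons f j y F : ps f.+1 j (y :: F) =
  inr (foldl minn y (y :: F)) ::
    ps f j (rem (foldl minn y (y :: F)) (y :: F) ++ kids m par (inr (foldl minn y (y :: F)))).
Proof. by []. Qed.

Lemma ps_nil f j : ps f.+1 j [::] =
  if j < n - m then inl j.+1 :: ps f j.+1 (kids m par (inl j.+1)) else [::].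
Proof. by []. Qed.

Lemma ps_inv fuel V j F : Inv V j F ->
  uniq (V ++ ps fuel j F) /\ all good (V ++ ps fuel j F) /\
  (size (ps fuel j F) < fuel -> forall i, 1 <= i <= m -> inr i \in V ++ ps fuel j F).
Proof.
elim: fuel V j F => [|f IH] V j F I.
  by rewrite /= cats0; case: I => uV _ _ _ _ gV _ _.
case: F I => [|y F] I.
  rewrite ps_nil. case: ifP => hj.
    rewrite -cat_rcons. have [u [g c]] := IH _ _ _ (inv_root I hj).
    by split => //; split => // /= hs; apply: c.
  rewrite cats0. case: (I) => uV _ _ _ _ gV _ hj'. split => //; split => // _.
  apply: closure. have -> : n - m = j by apply/eqP; rewrite eqn_leq hj' leqNgt hj.
  done.
rewrite ps_cons -cat_rcons.
have [u [g c]] := IH _ _ _ (inv_step I (foldl_min_in y F)).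
by split => //; split => // /= hs; apply: c.
Qed.

Notation vo := (visit_order m n par).

Lemma vo_props : uniq vo /\ all good vo /\ size vo <= n /\ forall i, 1 <= i <= m -> inr i \in vo.
Proof.
have [u [g c]] := ps_inv n inv_init.
have sz : size vo <= n by apply: size_ps.
split => //; split => //; split => // i hi.
rewrite leq_eqVlt in sz. case/orP: sz => [/eqP sz|]; last by move=> /c; apply.
pose N := map inr (iota 1 m) ++ map inl (iota 1 (n - m)) : seq (nat + nat).
have sub : {subset vo <= N}.
  move=> w /(allP g). rewrite /N mem_cat. case: w => [a|b] /= h.
    by apply/orP; right; rewrite mem_map ?mem_iota; [lia| exact: inl_inj].
  by apply/orP; left; rewrite mem_map ?mem_iota; [lia| exact: inr_inj].
have szN : size N <= size vo.
  rewrite /N size_cat !size_map !size_iota sz. case: H => hmn _. lia.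
have [_ e] := uniq_min_size u sub szN.
rewrite e /N mem_cat mem_map ?mem_iota; last exact: inr_inj. apply/orP; left; lia.
Qed.
End Inv.

Lemma in_take_index (T : eqType) (w : T) s t : (w \in take t s) -> index w s < t.
Proof.
elim: s t => [|a s IH] [|t] //=. rewrite in_cons eq_sym. case: (a == w) => //= /IH. done.
Qed.

Lemma index_in_take (T : eqType) (w : T) s t : w \in s -> index w s < t -> w \in take t s.
Proof.
elim: s t => [|a s IH] [|t] //=. rewrite !in_cons eq_sym. case: (a == w) => //= ws.
rewrite ltnS => /(IH _ ws). done.
Qed.

Section Steps.
Variables (m n : nat) (par : nat -> nat + nat).
Hypothesis H : is_ordforest m n par.
Notation vo := (visit_order m n par).
Notation st := (step_of m n par).

Lemma st_inr x : st (inr x) = (index (inr x) vo).+1.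
Proof. by []. Qed.

Lemma st_le x : 1 <= x <= m -> st (inr x) <= n.
Proof.
move=> hx. have [_ [_ [sz al]]] := vo_props H. rewrite st_inr.
apply: leq_trans sz. by rewrite index_mem al.
Qed.

Lemma par_in x : 1 <= x <= m ->
  par x = inl 0 \/ (par x \in vo /\ index (par x) vo < index (inr x) vo).
Proof.
move=> hx. have [_ [_ [_ al]]] := vo_props H.
have hin := al x hx.
have := @parent_before m n par n 0 (kids m par (inl 0)) (index (inr x) vo) x.
rewrite -/(visit_order m n par) index_mem hin nth_index // => /(_ isT erefl) /orP[|h].
  by rewrite kidsP hx /= => /eqP; left.
right; split; first exact: mem_take h.
exact: in_take_index h.
Qed.

Lemma st_par x : 1 <= x <= m -> st (par x) < st (inr x).
Proof.
move=> hx. case: (par_in hx) => [->|[_ h]] //.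
rewrite /step_of. case: ifP => // _. 
Qed.

Lemma st_inj x y : 1 <= x <= m -> 1 <= y <= m -> st (inr x) = st (inr y) -> x = y.
Proof.
move=> hx hy. have [_ [_ [_ al]]] := vo_props H. rewrite !st_inr => [[e]].
have := nth_index (inl 0) (al x hx). rewrite e nth_index ?al //. by case.
Qed.

Lemma between v z : 1 <= v <= m -> st (par v) < z < st (inr v) ->
  exists y, [/\ 1 <= y, y < v & st (inr y) = z].
Proof.
move=> hv /andP[h1 h2]. have [u [g [sz al]]] := vo_props H.
have hvin := al v hv.
set t := z.-1.
have zt : z = t.+1 by rewrite /t; lia.
rewrite zt st_inr ltnS in h2.
have hi : index (inr v) vo < size vo by rewrite index_mem.
have tsz : t < size vo by lia.
have nv : inr v \notin take t vo by apply/negP => /in_take_index; lia.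
have av : (v \in kids m par (inl 0)) || (par v \in take t vo).
  case: (par_in hv) => [e|[pin _]]; first by rewrite kidsP hv e eqxx.
  case: (eqVneq (par v) (inl 0)) => [e|ne]; first by rewrite kidsP hv e eqxx.
  apply/orP; right; apply: index_in_take => //.
  move: h1. rewrite /step_of (negbTE ne). lia.
have [y [ey yv]] := @avail_min m n par n 0 (kids m par (inl 0)) t v hv tsz av nv.
have yg : 1 <= y <= m.
  have := allP g (nth (inl 0) vo t) (mem_nth _ tsz). by rewrite ey.
have yne : y != v.
  apply/eqP => eyv. have := index_uniq (inl 0) tsz u. rewrite ey eyv. by move=> e; move: h2; rewrite e ltnn.
exists y; split; first by case/andP: yg.
  by rewrite ltn_neqAle yne yv.
by rewrite zt st_inr -ey index_uniq.
Qed.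
End Steps.

Section Graph.
Variable n : nat.
Implicit Types (E : {set edge n}) (x y z : 'I_n.+1).

Lemma conn_sym E x y : connect (adj E) x y = connect (adj E) y x.
Proof.
have := connect_rev (adj E) y x. rewrite /= => <-. apply: eq_connect => a b /=.
by rewrite /adj orbC.
Qed.

Definition convex E := forall x y z, connect (adj E) x y -> (x <= z <= y)%N -> connect (adj E) x z.

Lemma conv_side E x y : convex E -> ~~ connect (adj E) x y -> (x < y)%N ->
  forall u v, connect (adj E) x u -> connect (adj E) y v -> (u < v)%N.
Proof.
move=> cv nc xy u v cxu cyv. rewrite ltnNge; apply/negP => vu.
case: (ltnP v x) => vx.
  have cvy : connect (adj E) v y by rewrite conn_sym.
  have := cv _ _ x cvy. rewrite (ltnW vx) (ltnW xy) => /(_ isT) cvx.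
  move/negP: nc; apply. apply: connect_trans cvy. by rewrite conn_sym.
have := cv _ _ v cxu. rewrite vx vu => /(_ isT) cxv.
move/negP: nc; apply. apply: connect_trans cxv _. by rewrite conn_sym.
Qed.

Lemma conv_prio E : (forall e, e \in E -> (e.1 < e.2)%N) ->
  (forall e e', e \in E -> e' \in E -> e.2 = e'.2 -> e = e') -> convex E -> is_prio_forest E.
Proof.
move=> h1 h2 cv. split => //; split => // x y nc.
case: (ltngtP x y) => xy.
- by left; apply: conv_side.
- right; move=> u v cu cv'. apply: (@conv_side E y x cv) => //. by rewrite conn_sym.
- by move: nc; rewrite (val_inj xy) connect0.
Qed.

Lemma conv0 : convex set0.
Proof.
move=> x y z /connectP[[|a p]] /=.
  move=> _ -> le. have -> : z = x by apply: val_inj; apply/eqP; rewrite eqn_leq; case/andP: le => -> ->.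
  exact: connect0.
by rewrite /adj !inE.
Qed.

Lemma conv_add E (p s : 'I_n.+1) : convex E -> (p < s)%N ->
  (forall z, (p <= z < s)%N -> connect (adj E) p z) -> convex (E :|: [set (p, s)]).
Proof.
move=> cv ps hz.
set E' := E :|: [set (p, s)].
have sub : subrel (adj E) (connect (adj E')).
  move=> a b hab. apply: connect1. by move: hab; rewrite /adj !inE => /orP[]->; rewrite ?orbT.
have subc : subrel (connect (adj E)) (connect (adj E')) by apply: connect_sub.
pose U z := connect (adj E) p z || connect (adj E) s z.
have Ucl a b : U a -> connect (adj E) a b -> U b.
  by rewrite /U => /orP[] h hab; rewrite (connect_trans h hab) ?orbT.
have Ucl' a b : U a -> connect (adj E) b a -> U b.
  by move=> Ua; rewrite conn_sym; apply: Ucl.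
pose R a b := connect (adj E) a b || (U a && U b).
have Rtr a b c : R a b -> R b c -> R a c.
  rewrite /R => /orP[h1|/andP[u1 u2]] /orP[h2|/andP[u3 u4]].
  - by rewrite (connect_trans h1 h2).
  - by rewrite (Ucl' _ _ u3 h1) u4 orbT.
  - by rewrite u1 (Ucl _ _ u2 h2) orbT.
  - by rewrite u1 u4 orbT.
have Up : U p by rewrite /U connect0.
have Us : U s by rewrite /U connect0 orbT.
have Radj a b : adj E' a b -> R a b.
  rewrite /adj !inE -!/(adj E a b) => /orP[/orP[h|/eqP[-> ->]]|/orP[h|/eqP[-> ->]]].
  - by rewrite /R connect1 // /adj h.
  - by rewrite /R Up Us orbT.
  - by rewrite /R connect1 // /adj h orbT.
  - by rewrite /R Up Us orbT.
have key a b : connect (adj E') a b -> R a b.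
  move/connectP => [q hq ->]. elim: q a hq => [|c q IH] a /=.
    by move=> _; rewrite /R connect0.
  move=> /andP[hac hq]. apply: Rtr (Radj _ _ hac) _. exact: IH.
have Up' a : U a -> connect (adj E') p a.
  case/orP => h; first exact: subc.
  apply: connect_trans (subc _ _ h). apply: connect1. by rewrite /adj !inE eqxx !orbT.
move=> x y z cxy /andP[xz zy].
case/orP: (key _ _ cxy) => [h|/andP[Ux Uy]].
  by apply: subc; apply: cv h _; rewrite xz zy.
suff Uz : U z.
  apply: connect_trans (Up' _ Uz). rewrite conn_sym. exact: Up'.
case: (ltnP z p) => zp.
  case/orP: Ux => h.
    have hx : connect (adj E) x p by rewrite conn_sym.
    have := cv _ _ z hx. rewrite xz (ltnW zp) => /(_ isT) hxz.
    apply: Ucl' Up _. rewrite conn_sym. apply: connect_trans hxz. by rewrite conn_sym.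
  have hx : connect (adj E) x s by rewrite conn_sym.
  have := cv _ _ z hx. rewrite xz (ltnW (leq_trans zp (ltnW ps))) => /(_ isT) hxz.
  apply: Ucl' Us _. rewrite conn_sym. apply: connect_trans hxz. by rewrite conn_sym.
case: (ltnP z s) => zs.
  by rewrite /U hz // zp zs.
case/orP: Uy => h.
  have := cv _ _ z h. rewrite zy (leq_trans (ltnW ps) zs) => /(_ isT) hz'.
  by rewrite /U hz'.
have := cv _ _ z h. rewrite zy zs => /(_ isT) hz'.
by rewrite /U hz' orbT.
Qed.
End Graph.

Section Main.
Variables (m n : nat) (par : nat -> nat + nat).
Hypothesis H : is_ordforest m n par.
Notation st := (step_of m n par).

Definition ed (i : 'I_m) : edge n :=
  ((inord (st (par i.+1)) : 'I_n.+1), (inord (st (inr i.+1)) : 'I_n.+1)).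

Definition Q (k : nat) : {set edge n} := [set ed i | i in [pred i : 'I_m | (i < k)%N]].

Lemma lab (i : 'I_m) : 1 <= i.+1 <= m.
Proof. by rewrite ltn_ord. Qed.

Lemma ed2 i : val (ed i).2 = st (inr i.+1).
Proof. by rewrite /= inordK // ltnS st_le // lab. Qed.

Lemma ed1 i : val (ed i).1 = st (par i.+1).
Proof.
rewrite /= inordK // ltnS. apply: leq_trans (ltnW (st_par H (lab i))) _. by rewrite st_le // lab.
Qed.

Lemma ed_lt i : ((ed i).1 < (ed i).2)%N.
Proof. rewrite ed1 ed2. have := @st_par m n par H i.+1 (lab i). exact. Qed.

Lemma ed_inj i j : val (ed i).2 = val (ed j).2 -> i = j.
Proof.
rewrite !ed2 => /(st_inj H (lab i) (lab j)) [e]. exact: val_inj.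
Qed.

Lemma QP k e : reflect (exists2 i : 'I_m, (i < k)%N & e = ed i) (e \in Q k).
Proof.
apply: (iffP imsetP) => [[i hi ->]|[i hi ->]]; by exists i.
Qed.

Lemma Q0 : Q 0 = set0.
Proof. apply/setP => e. rewrite inE. by apply/QP => [[i]]. Qed.

Lemma Qm : Q m = prio_forest m n par.
Proof.
apply/setP => e. apply/QP/imsetP => [[i _ ->]|[i _ ->]]; by exists i.
Qed.

Lemma QS (k : 'I_m) : Q k.+1 = Q k :|: [set ed k].
Proof.
apply/setP => e. rewrite inE in_set1. apply/QP/orP => [[i hi ->]|[/QP[i hi ->]|/eqP->]].
- rewrite ltnS leq_eqVlt in hi. case/orP: hi => [/eqP/val_inj->|hi]; first by right.
  by left; apply/QP; exists i.
- by exists i => //; apply: ltnW.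
- by exists k.
Qed.

Lemma edQ (k : 'I_m) : ed k \notin Q k.
Proof. apply/QP => [[i hi /(f_equal (fun e : edge n => val e.2)) /ed_inj e]]. by move: hi; rewrite e ltnn. Qed.

Lemma Q_lt k e : e \in Q k -> (e.1 < e.2)%N.
Proof. by case/QP => i _ ->; apply: ed_lt. Qed.

Lemma Q_uniq k e e' : e \in Q k -> e' \in Q k -> e.2 = e'.2 -> e = e'.
Proof. by case/QP => i _ -> /QP[j _ ->] /(f_equal val) /ed_inj ->. Qed.

Lemma Q_conv k : k <= m -> convex (Q k).
Proof.
elim: k => [|k IH] hk; first by rewrite Q0; apply: conv0.
have cvk := IH (ltnW hk).
pose kk : 'I_m := Ordinal hk.
rewrite (QS kk).
have -> : ed kk = ((ed kk).1, (ed kk).2) by [].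
apply: conv_add => //; first exact: ed_lt.
set p := (ed kk).1. set s := (ed kk).2.
suff: forall N (z : 'I_n.+1), (z < N)%N -> (p <= z < s)%N -> connect (adj (Q k)) p z.
  move=> h z; exact: h (ltnSn _).
elim=> [|N IHN] z //. rewrite ltnS => zN /andP[pz zs].
case: (eqVneq (val z) (val p)) => [e|ne].
  by rewrite (val_inj e) connect0.
have pz' : (p < z)%N by rewrite ltn_neqAle eq_sym ne pz.
have [y [y1 yk ey]] : exists y, [/\ 1 <= y, y < k.+1 & st (inr y) = z].
  apply: (between H (lab kk)). by rewrite -(ed1 kk) -(ed2 kk) -/p -/s pz' zs.
have ym : y.-1 < m by lia.
pose i : 'I_m := Ordinal ym.
have iQ : ed i \in Q k by apply/QP; exists i => //=; lia.
have ei : (ed i).2 = z by apply: val_inj; rewrite ed2 /= prednK.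
have qz : connect (adj (Q k)) (ed i).1 z.
  apply: connect1. by rewrite /adj -ei -surjective_pairing iQ.
have qlt : ((ed i).1 < z)%N by rewrite -ei ed_lt.
case: (leqP p (ed i).1) => hq.
  apply: connect_trans qz. apply: IHN; first lia. by rewrite hq /= (ltn_trans qlt zs).
have := cvk _ _ p qz. rewrite (ltnW hq) pz => /(_ isT) qp.
apply: connect_trans qz. by rewrite conn_sym.
Qed.

Lemma Q_prio k : k <= m -> is_prio_forest (Q k).
Proof.
move=> hk. apply: conv_prio; [exact: Q_lt | exact: Q_uniq | exact: Q_conv].
Qed.

Lemma cover_Q (k : 'I_m) : pf_cover (Q k) (Q k.+1).
Proof.
have hk : k.+1 <= m by exact: ltn_ord.
split; first exact: Q_prio (ltnW hk).
split; first exact: Q_prio hk.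
rewrite QS. split.
  rewrite properE subsetUl /=. apply/negP => /subsetP /(_ (ed k)).
  by rewrite inE set11 orbT => /(_ isT); apply/negP; exact: edQ.
move=> R _ s1 s2. case: (boolP (ed k \in R)) => ek.
  right; apply/eqP; rewrite eqEsubset s2 subUset s1 sub1set ek. done.
left; apply/eqP; rewrite eqEsubset s1 andbT. apply/subsetP => x xR.
have := subsetP s2 x xR. rewrite inE in_set1 => /orP[//|/eqP ex].
by move: ek; rewrite -ex xR.
Qed.

Lemma lambda_Q (k : 'I_m) : lambda (Q k) (Q k.+1) = st (inr k.+1).
Proof.
rewrite /lambda. case: pickP => [x|h].
  rewrite QS in_setD inE in_set1 => /andP[xn /orP[xq|/eqP->]]; first by rewrite xq in xn.
  rewrite -ed2. apply/maxn_idPr. exact: ltnW (ed_lt k).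
have := h (ed k). by rewrite QS in_setD inE in_set1 eqxx orbT andbT (negbTE (edQ k)).
Qed.
End Main.
Unset Implicit Arguments.

Theorem lemma3p3 (m n : nat) (par : nat -> nat + nat) :
  is_ordforest m n par ->
  exists! c : {ffun 'I_m.+1 -> {set edge n}},
    max_chain (prio_forest m n par) c /\
    (forall k : 'I_m, JH c k = tau_inv m n par k.+1).
Proof.
move=> H.
have ik (k : 'I_m) : (inord k : 'I_m.+1) = k :> nat by rewrite inordK // ltnS ltnW.
have ik1 (k : 'I_m) : (inord k.+1 : 'I_m.+1) = k.+1 :> nat by rewrite inordK // ltnS.
exists [ffun k : 'I_m.+1 => Q m n par k]. split.
  split; [split; [|split] |].
  - by rewrite ffunE (Q0 m n par).
  - by rewrite ffunE /= (Qm m n par).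
  - by move=> k; rewrite !ffunE ik ik1; apply: (cover_Q H).
  - by move=> k; rewrite /JH !ffunE ik ik1 (lambda_Q H).
move=> c [[c0 [cm ccov]] cJH].
have mono (k : 'I_m) : c (inord k) \subset c (inord k.+1).
  by case: (ccov k) => _ [_ [/properP[]]].
have subP : forall d i, i + d = m -> c (inord i) \subset prio_forest m n par.
  elim=> [|d IHd] i e.
    rewrite addn0 in e. rewrite -cm e. have -> : (inord m : 'I_m.+1) = ord_max by apply: val_inj; rewrite /= inordK.
    exact: subxx.
  have hi : i < m by lia.
  apply: subset_trans (mono (Ordinal hi)) _. apply: IHd => /=. lia.
have eqQ : forall k, k <= m -> c (inord k) = Q m n par k.
  elim=> [|k IH] hk.
    rewrite (Q0 m n par) -c0. have -> : (inord 0 : 'I_m.+1) = ord0 by apply: val_inj; rewrite /= inordK.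
    done.
  pose kk : 'I_m := Ordinal hk.
  have IH' := IH (ltnW hk).
  have [_ [_ [_ cmax]]] := ccov kk.
  have JHk := cJH kk. rewrite /JH /= in JHk. rewrite IH' in JHk cmax.
  set c' := c (inord k.+1) in JHk cmax *.
  have c'P : c' \subset prio_forest m n par by apply: (subP (m - k.+1)); lia.
  have ek : ed n par kk \in c'.
    move: JHk. rewrite /lambda. case: pickP => [x|_]; last first.
      rewrite /tau_inv /step_of /=. done.
    rewrite in_setD => /andP[xn xc] hx.
    have := subsetP c'P x xc. rewrite -(Qm m n par) => /(QP m par)[i _ exi].
    have : val (ed n par i).2 = val (ed n par kk).2.
      rewrite !(ed2 H) /=. rewrite /tau_inv in hx. rewrite -hx exi.
      by rewrite (maxn_idPr (ltnW (ed_lt H i))) (ed2 H).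
    move/(ed_inj H) => eik. by rewrite -eik -exi.
  have := cmax (Q m n par k.+1) (Q_prio H hk).
  rewrite (QS n par kk) subsetUl => /(_ isT).
  rewrite subUset -IH' (mono kk) sub1set ek => /(_ isT) [e|<-] //.
  have : ed n par kk \in c (inord k) by rewrite -e inE in_set1 eqxx orbT.
  by rewrite IH' (negbTE (edQ H kk)).
apply/ffunP => i. rewrite ffunE -eqQ; last by rewrite -ltnS.
by rewrite inord_val.
Qed.
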